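(* In the setting below, assume each $f_i$ is $L_i$-smooth and there is $x_*$ with $F(x_* )=\inf F\in\mathbb R$. If $\eta_k\le\frac1{2n\sqrt{\bar LL^*}}$ for all $k\in[K]$, then for any $k\in[K]$, any permutation $\sigma_k$ and any $z\in\mathbb R^d$, $$\frac1n\sum_{i=1}^n\Big(B_{f_{\sigma_k^i}}(x_{k+1},x_k^i)-B_{f_{\sigma_k^i}}(z,x_k^i)\Big)\le\bar L\|x_{k+1}-x_k\|^2+8\eta_k^2n^2\bar L^2B_f(z,x_* )+4\eta_k^2R_k,$$ where $R_k=\sum_{i=2}^n\frac{L_{\sigma_k^i}}{n}\Big\|\sum_{j=1}^{i-1}\nabla f_{\sigma_k^j}(x_* )\Big\|^2$.
   Context: Setting. Let $n,d\in\mathbb N$, let $f_1,\dots,f_n:\mathbb R^d\to\mathbb R$ be convex, $f=\frac1n\sum_{i=1}^nf_i$, let $\psi:\mathbb R^d\to\mathbb R\cup\{+\infty\}$ be proper, closed and convex, and $F=f+\psi$. $B_g(x,y)=g(x)-g(y)-\langle\nabla g(y),x-y\rangle$ is the Bregman divergence. Proximal shuffling gradient method: given $x_1\in\mathrm{dom}\,\psi$, a number of epochs $K\ge2$ and stepsizes $\eta_k>0$, for $k=1,\dots,K$: choose a permutation $\sigma_k=(\sigma_k^1,\dots,\sigma_k^n)$ of $[n]=\{1,\dots,n\}$; set $x_k^1=x_k$ and $x_k^{i+1}=x_k^i-\eta_k\nabla f_{\sigma_k^i}(x_k^i)$ for $i=1,\dots,n$; set $x_{k+1}=\arg\min_{x\in\mathbb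 R^d}\{n\psi(x)+\frac{1}{2\eta_k}\|x-x_k^{n+1}\|^2\}$. Smoothness: each $f_i$ is differentiable with $\|\nabla f_i(x)-\nabla f_i(y)\|\le L_i\|x-y\|$ for all $x,y$, $L_i>0$; $\bar L=\frac1n\sum_iL_i$, $L^*=\max_iL_i$. *)

(* Defs.v *)
From HB Require Import structures.
From mathcomp Require Import all_boot all_order all_algebra all_fingroup.
From mathcomp Require Import all_classical all_reals all_analysis.
Import Order.TTheory GRing.Theory Num.Theory.
Import numFieldNormedType.Exports.

Set Implicit Arguments.
Unset Strict Implicit.
Unset Printing Implicit Defensive.

Local Open Scope ring_scope.

Section Defs.
Variables (R : realType) (d : nat).
Notation vec := 'rV[R]_d.

Definition dotv (u v : vec) : R := \sum_(i < d) u ord0 i * v ord0 i.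
Definition enorm (u : vec) : R := Num.sqrt (dotv u u).

Definition convex_fun (f : vec -> R) : Prop :=
  forall (x y : vec) (t : R), 0 <= t <= 1 ->
    f (t *: x + (1 - t) *: y) <= t * f x + (1 - t) * f y.

Definition has_gradient (f : vec -> R) (g : vec -> vec) : Prop :=
  forall x : vec, differentiable (f : vec -> R^o) x /\
    forall v : vec, 'd (f : vec -> R^o) x v = dotv (g x) v.

Definition smooth_with (f : vec -> R) (g : vec -> vec) (L : R) : Prop :=
  has_gradient f g /\ forall x y : vec, enorm (g x - g y) <= L * enorm (x - y).

Definition bregman (f : vec -> R) (g : vec -> vec) (x y : vec) : R :=
  f x - f y - dotv (g y) (x - y).

Definition proper_fun (psi : vec -> \bar R) : Prop :=
  (forall x, psi x != -oo%E) /\ (exists x, psi x \is a fin_num).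
Definition closed_fun (psi : vec -> \bar R) : Prop :=
  closed [set p : vec * R | (psi p.1 <= p.2%:E)%E].
Definition convex_efun (psi : vec -> \bar R) : Prop :=
  forall (x y : vec) (t : R), 0 <= t <= 1 ->
    (psi (t *: x + (1 - t) *: y)%R <= t%:E * psi x + (1 - t)%:E * psi y)%E.

(* i-th element (0-based) of a permutation, as an option *)
Definition perm_at n (s : {perm 'I_n}) (i : nat) : option 'I_n :=
  omap s (insub i).

(* inner iterates of one epoch: inner_iter ... i = x_k^{i+1} (paper's 1-based
   indexing), i.e. inner_iter 0 = x_k and
   inner_iter (i+1) = inner_iter i - eta * grad f_{sigma(i)} (inner_iter i) *)
Fixpoint inner_iter n (g : 'I_n -> vec -> vec) (s : {perm 'I_n}) (eta : R)
    (x0 : vec) (i : nat) : vec :=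
  match i with
  | 0 => x0
  | i'.+1 =>
      let y := inner_iter g s eta x0 i' in
      match perm_at s i' with
      | Some j => y - eta *: g j y
      | None => y
      end
  end.

End Defs.

(* Main.v *)
Require Import Defs.
From HB Require Import structures.
From mathcomp Require Import all_boot all_order all_algebra all_fingroup.
From mathcomp Require Import all_classical all_reals all_analysis.
From mathcomp Require Import ring lra.
Import Order.TTheory GRing.Theory Num.Theory.
Import numFieldNormedType.Exports.
Local Open Scope ring_scope.

Section FileA.
Set Implicit Arguments. Unset Strict Implicit.

Section Aux.
Variables (R : realType) (d : nat).
Notation vec := 'rV[R]_d.
Definition sq (u : vec) := dotv u u.

Lemma dotvC (u v : vec) : dotv u v = dotv v u.
Proof. by apply: eq_bigr => i _; rewrite mulrC. Qed.
Lemma dotvDl (u w v : vec) : dotv (u + w) v = dotv u v + dotv w v.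
Proof. by rewrite /dotv -big_split; apply: eq_bigr => i _; rewrite !mxE mulrDl. Qed.
Lemma dotvZl a (u v : vec) : dotv (a *: u) v = a * dotv u v.
Proof. by rewrite /dotv big_distrr; apply: eq_bigr => i _; rewrite !mxE -mulrA. Qed.
Lemma dotvNl (u v : vec) : dotv (- u) v = - dotv u v.
Proof. by rewrite -scaleN1r dotvZl mulN1r. Qed.
Lemma dotvBl (u w v : vec) : dotv (u - w) v = dotv u v - dotv w v.
Proof. by rewrite dotvDl dotvNl. Qed.
Lemma dotvDr (u w v : vec) : dotv v (u + w) = dotv v u + dotv v w.
Proof. by rewrite !(dotvC v) dotvDl. Qed.
Lemma dotvZr a (u v : vec) : dotv v (a *: u) = a * dotv v u.
Proof. by rewrite !(dotvC v) dotvZl. Qed.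
Lemma dotvNr (u v : vec) : dotv v (- u) = - dotv v u.
Proof. by rewrite !(dotvC v) dotvNl. Qed.
Lemma dotvBr (u w v : vec) : dotv v (u - w) = dotv v u - dotv v w.
Proof. by rewrite !(dotvC v) dotvBl. Qed.
Lemma dotv0l (v : vec) : dotv 0 v = 0.
Proof. by rewrite -(scale0r 0) dotvZl mul0r. Qed.
Lemma dotv_suml (I : Type) (r : seq I) (P : pred I) (w : I -> vec) v :
  dotv (\sum_(i <- r | P i) w i) v = \sum_(i <- r | P i) dotv (w i) v.
Proof.
elim/big_rec2: _ => [|i a b _ <-]; first exact: dotv0l.
by rewrite dotvDl.
Qed.
Lemma sq_ge0 (u : vec) : 0 <= sq u.
Proof. by apply: sumr_ge0 => i _; rewrite -expr2 sqr_ge0. Qed.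
Lemma enorm_sq (u : vec) : enorm u ^+ 2 = sq u.
Proof. by rewrite /enorm sqr_sqrtr // sq_ge0. Qed.
Lemma sqN (u : vec) : sq (- u) = sq u.
Proof. by rewrite /sq dotvNl dotvNr opprK. Qed.
Lemma sqZ a (u : vec) : sq (a *: u) = a ^+ 2 * sq u.
Proof. by rewrite /sq dotvZl dotvZr mulrA expr2. Qed.
Lemma sqD (u v : vec) : sq (u + v) = sq u + 2 * dotv u v + sq v.
Proof. rewrite /sq dotvDl !dotvDr (dotvC v u); ring. Qed.
Lemma sqB (u v : vec) : sq (u - v) = sq u - 2 * dotv u v + sq v.
Proof. by rewrite sqD dotvNr sqN; ring. Qed.
Lemma sqD_le (u v : vec) : sq (u + v) <= 2 * sq u + 2 * sq v.
Proof.
have := sq_ge0 (u - v); rewrite sqB sqD => h; lra.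
Qed.
Lemma sq3_le (u v w : vec) : sq (u + v + w) <= 2 * sq u + 4 * sq v + 4 * sq w.
Proof.
rewrite -addrA; have h1 := sqD_le u (v + w); have h2 := sqD_le v w; lra.
Qed.
Lemma dot_le (w u : vec) m : 0 < m -> sq w <= m ^+ 2 * sq u -> dotv w u <= m * sq u.
Proof.
move=> m0 h.
have := sq_ge0 (w - m *: u); rewrite sqB sqZ dotvZr => h2.
have : 2 * m * dotv w u <= 2 * m * (m * sq u) by nra.
by rewrite ler_pM2l ?mulr_gt0.
Qed.
End Aux.

End FileA.

Section FileB.
Set Implicit Arguments. Unset Strict Implicit.

Section Line.
Variables (R : realType) (d : nat).
Notation vec := 'rV[R]_d.
Variables (f : vec -> R) (g : vec -> vec).
Hypothesis Hg : has_gradient f g.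

Lemma line_derive (y u : vec) (t : R) :
  is_derive t 1 (fun s : R => f (s *: u + y) : R^o) (dotv (g (t *: u + y)) u).
Proof.
have [df dg] := Hg (t *: u + y).
have e : (fun h : R => h^-1 *: (((fun s : R => f (s *: u + y) : R^o) \o shift t) (h *: 1) 
             - (fun s : R => f (s *: u + y) : R^o) t))
   = (fun h : R => h^-1 *: (((f : vec -> R^o) \o shift (t *: u + y)) (h *: u) - (f : vec -> R^o) (t *: u + y))).
  apply: funext => h /=; congr (_ *: (f _ - _)).
  by rewrite scalerDl addrA [h *: 1]mulr1.
apply: DeriveDef.
  by rewrite /derivable e; apply: diff_derivable.
by rewrite /derive e -dg -deriveE.
Qed.
End Line.

End FileB.

Section FileC.
Set Implicit Arguments. Unset Strict Implicit.

Section Quad.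
Variables (R : realType) (d : nat).
Notation vec := 'rV[R]_d.
Variables (f : vec -> R) (g : vec -> vec).
Hypothesis Hg : has_gradient f g.

Lemma line_derive' (y u : vec) (t : R) :
  is_derive t 1 (fun s : R => f (s *: u + y) : R) (dotv (g (t *: u + y)) u).
Proof. exact: (@line_derive R d f g Hg y u t). Qed.
End Quad.
Section Quad2.
Variables (R : realType) (d : nat).
Notation vec := 'rV[R]_d.
Variables (f : vec -> R) (g : vec -> vec).
Hypothesis Hg : has_gradient f g.

Definition quadf (y u : vec) (A B : R) : R -> R :=
  (fun s : R => f (s *: u + y)) - A \*: (@id R) - B \*: ((@id R) ^+ 2).

Lemma quadfE y u A B s : quadf y u A B s = f (s *: u + y) - A * s - B * s ^+ 2.
Proof. by []. Qed.

Lemma quad_derive (y u : vec) (A B t : R) :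
  is_derive t 1 (quadf y u A B)
     (dotv (g (t *: u + y)) u - A - 2 * t * B).
Proof.
have h1 := @line_derive' R d f g Hg y u t.
have h2 : is_derive t 1 (A \*: (@id R)) (A *: (1 : R)) by exact: is_deriveZ.
have h3 : is_derive t 1 (B \*: ((@id R) ^+ 2)) (B *: ((2%:R * t ^+ 1) *: (1:R))).
  apply: is_deriveZ; exact: is_deriveX.
have h4 := is_deriveB (is_deriveB h1 h2) h3.
suff -> : dotv (g (t *: u + y)) u - A - 2 * t * B =
   dotv (g (t *: u + y)) u - A%:A - B *: (2 * t ^+ 1)%:A by exact: h4.
rewrite /GRing.scale /= !mulr1 expr1; ring.
Qed.
End Quad2.

End FileC.

Section FileD.
Set Implicit Arguments. Unset Strict Implicit.
Local Open Scope classical_set_scope.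
Local Open Scope ring_scope.

Section Descent.
Variables (R : realType) (d : nat).
Notation vec := 'rV[R]_d.
Variables (f : vec -> R) (g : vec -> vec) (L : R).
Hypothesis Hs : smooth_with f g L.
Hypothesis L0 : 0 < L.

Lemma lip2 (a b : vec) : sq (g a - g b) <= L ^+ 2 * sq (a - b).
Proof.
have [_ Hl] := Hs; have h := Hl a b.
rewrite -!enorm_sq.
have e0 : 0 <= enorm (g a - g b) by exact: sqrtr_ge0.
have e1 : 0 <= enorm (a - b) by exact: sqrtr_ge0.
nra.
Qed.

Lemma line_dot (y u : vec) c : 0 < c -> 
  dotv (g (c *: u + y) - g y) u <= L * c * sq u.
Proof.
move=> c0; apply: dot_le; first by rewrite mulr_gt0.
have := lip2 (c *: u + y) y; rewrite addrK sqZ; nra.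
Qed.

Lemma descent (x y : vec) : bregman f g x y <= L / 2 * sq (x - y).
Proof.
have [Hg _] := Hs.
set u := x - y; set A := dotv (g y) u; set B := L / 2 * sq u.
have hd := @quad_derive R d f g Hg y u A B.
have cont : {within `[0, 1], continuous (quadf f y u A B)}.
  by apply: derivable_within_continuous => t _; exact: ex_derive.
have [c /andP [c0 c1] hc] := MVT (@ltr01 R) (fun t _ => hd t) cont.
move: hc; rewrite !quadfE scale1r scale0r add0r subrK subr0 mulr1.
rewrite expr1n expr0n /= !mulr1 !mulr0 !subr0.
have hl := line_dot y u c0.
rewrite dotvBl in hl.
rewrite /bregman -/u -/A => hc.
have : dotv (g (c *: u + y)) u - A - 2 * c * B <= 0.
  have e : 2 * c * B = L * c * sq u by rewrite /B; field.
  rewrite e; move: hl; rewrite -/A; lra.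
lra.
Qed.
End Descent.

End FileD.

Section FileE.
Set Implicit Arguments. Unset Strict Implicit.
Local Open Scope classical_set_scope.
Local Open Scope ring_scope.

Section FO.
Variables (R : realType) (d : nat).
Notation vec := 'rV[R]_d.
Variables (f : vec -> R) (g : vec -> vec) (L : R).
Hypothesis Hs : smooth_with f g L.
Hypothesis L0 : 0 < L.
Hypothesis Hc : convex_fun f.

Lemma line_dot' (y u : vec) c : 0 < c -> 
  - (L * c * sq u) <= dotv (g (c *: u + y) - g y) u.
Proof.
move=> c0; rewrite -[X in _ <= X]opprK -dotvNl lerN2; apply: dot_le; first by rewrite mulr_gt0.
rewrite sqN; have := lip2 Hs (c *: u + y) y; rewrite addrK sqZ; nra.
Qed.

Lemma first_order (x y : vec) : f y + dotv (g y) (x - y) <= f x.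
Proof.
have [Hg _] := Hs.
set u := x - y; set A := dotv (g y) u; set D := f x - f y.
have S0 : 0 <= sq u by exact: sq_ge0.
have claim : forall t, 0 < t <= 1 -> A <= D + L * t * sq u.
  move=> t /andP [t0 t1].
  have hd := @line_derive' R d f g Hg y u.
  have cont : {within [set` `[0, t]%R], continuous (fun s : R => f (s *: u + y))}.
    by apply: derivable_within_continuous => s _; exact: ex_derive.
  have [c /andP [c0 c1] hc] := MVT t0 (fun s _ => hd s) cont.
  move: hc; rewrite scale0r add0r subr0.
  have hcv := Hc x y (t:=t); rewrite t1 ltW // in hcv.
  have e : t *: x + (1 - t) *: y = t *: u + y.
    by rewrite /u scalerBr scalerBl scale1r addrA addrAC.
  rewrite e in hcv; move=> hc.
  have hdc : dotv (g (c *: u + y)) u <= D.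
    have : dotv (g (c *: u + y)) u * t <= D * t by rewrite /D; nra.
    by rewrite ler_pM2r.
  have hl := line_dot' y u c0; rewrite dotvBl -/A in hl.
  have : L * c * sq u <= L * t * sq u.
    by apply: ler_wpM2r => //; rewrite ler_pM2l // ltW.
  lra.
rewrite -lerBrDl -/D -/A; rewrite leNgt; apply/negP => hlt.
set e := A - D.
have e0 : 0 < e by rewrite /e subr_gt0.
have LS0 : 0 <= L * sq u by rewrite mulr_ge0 // ltW.
set t := e / (e + L * sq u).
have den : 0 < e + L * sq u by lra.
have t0 : 0 < t by rewrite /t divr_gt0.
have t1 : t <= 1 by rewrite /t ler_pdivrMr // mul1r; lra.
have := claim t; rewrite t0 t1 => /(_ isT).
have tt : t * (e + L * sq u) = e by rewrite /t divfK // gt_eqF.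
have : L * t * sq u < e.
  rewrite -(ltr_pM2r den) -mulrA. 
  nra.
rewrite /e; lra.
Qed.
End FO.
Lemma alg_aux (R : realType) (fx fy fp dv qa qb : R) :
  fy + (dv - qb) <= fp -> fp - fx - - qa <= (qa - qb) / 2 ->
  (qa - qb) / 2 <= fx - fy - dv.
Proof. move=> h1 h2; lra. Qed.

Section Coco.
Variables (R : realType) (d : nat).
Notation vec := 'rV[R]_d.
Variables (f : vec -> R) (g : vec -> vec) (L : R).
Hypothesis Hs : smooth_with f g L.
Hypothesis L0 : 0 < L.
Hypothesis Hc : convex_fun f.

Lemma cocoercive (x y : vec) : sq (g x - g y) / (2 * L) <= bregman f g x y.
Proof.
set w := g x - g y; set p := x - L^-1 *: w.
have h1 := first_order Hs L0 Hc p y.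
have h2 := descent Hs L0 p x.
have e1 : p - y = (x - y) - L^-1 *: w by rewrite /p addrAC.
have e2 : p - x = - (L^-1 *: w) by rewrite /p addrAC subrr add0r.
rewrite /bregman e2 sqN sqZ dotvNr dotvZr in h2.
rewrite e1 dotvBr dotvZr in h1.
have ew : sq w = dotv (g x) w - dotv (g y) w by rewrite /sq {1}/w dotvBl.
rewrite /bregman.
set a := dotv (g x) w in h2 ew *; set b := dotv (g y) w in h1 ew *.
set s := sq w in h2 ew *.
have il : L^-1 * L = 1 by rewrite mulVf // gt_eqF.
have H3 : L / 2 * (L^-1 ^+ 2 * s) = (L^-1 * a - L^-1 * b) / 2.
  by rewrite -mulrBr -ew; field; rewrite gt_eqF.
have H4 : s / (2 * L) = (L^-1 * a - L^-1 * b) / 2.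
  by rewrite -mulrBr -ew; field; rewrite gt_eqF.
rewrite H3 in h2; rewrite H4.
exact: (@alg_aux R (f x) (f y) (f p) (dotv (g y) (x - y)) (L^-1 * a) (L^-1 * b) h1 h2).
Qed.
End Coco.

End FileE.

Section FileF.
Set Implicit Arguments. Unset Strict Implicit.

Lemma wcs_step (R : realFieldType) (B C Q b c : R) : 0 < c -> 0 <= C -> 0 <= Q ->
  B ^+ 2 <= C * Q -> (b + B) ^+ 2 <= (c + C) * (b ^+ 2 / c + Q).
Proof.
move=> c0 C0 Q0 h.
set q := b / c.
have hb : b = c * q by rewrite /q mulrC divfK // gt_eqF.
have hq : b ^+ 2 / c = c * q ^+ 2 by rewrite hb; field; rewrite gt_eqF.
rewrite hq hb.
have key : 0 <= Q + C * q ^+ 2 - 2 * q * B.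
  have [C00|Cpos] := eqVneq C 0.
    rewrite C00 mul0r in h; have B0 : B = 0 by nra.
    by rewrite B0 C00; lra.
  have Cp : 0 < C by rewrite lt_def Cpos C0.
  have hs := sqr_ge0 (B - C * q).
  have : 0 <= C * (Q + C * q ^+ 2 - 2 * q * B) by nra.
  by rewrite pmulr_rge0.
nra.
Qed.

Lemma wcs (R : realFieldType) (I : Type) (r : seq I) (P : pred I) (c b : I -> R) :
  (forall j, P j -> 0 < c j) ->
  (\sum_(j <- r | P j) b j) ^+ 2 <=
    (\sum_(j <- r | P j) c j) * \sum_(j <- r | P j) (b j ^+ 2 / c j).
Proof.
move=> hc; elim: r => [|j r IH]; first by rewrite !big_nil expr0n mul0r.
rewrite !big_cons; case: ifP => // Pj.
apply: wcs_step => //; first exact: hc.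
  by apply: sumr_ge0 => i Pi; apply/ltW/hc.
by apply: sumr_ge0 => i Pi; rewrite divr_ge0 ?sqr_ge0 // ltW // hc.
Qed.

Lemma wcs_vec (R : realType) (d : nat) (I : Type) (r : seq I) (P : pred I) (c : I -> R)
  (w : I -> 'rV[R]_d) :
  (forall j, P j -> 0 < c j) ->
  sq (\sum_(j <- r | P j) w j) <=
    (\sum_(j <- r | P j) c j) * \sum_(j <- r | P j) (sq (w j) / c j).
Proof.
move=> hc; rewrite /sq /dotv.
under eq_bigr => m _ do rewrite summxE -expr2.
under [X in _ <= _ * X]eq_bigr => j _ do rewrite mulr_suml.
rewrite exchange_big /= mulr_sumr; apply: ler_sum => m _.
under [X in _ <= _ * X]eq_bigr => j _ do rewrite -expr2.
exact: wcs.
Qed.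

End FileF.

Section FileG.
Set Implicit Arguments. Unset Strict Implicit.

Lemma sum_ltS (V : nmodType) n (F : 'I_n -> V) (io : 'I_n) :
  \sum_(j < n | (j < (io : nat).+1)%N) F j = \sum_(j < n | (j < io)%N) F j + F io.
Proof.
rewrite (bigD1 io) /=; last by rewrite ltnSn.
rewrite addrC; congr (_ + _).
apply: eq_bigl => j; rewrite ltnS -val_eqE /=.
by case: ltngtP.
Qed.

Lemma iter_sum (R : realType) (d n : nat) (g : 'I_n -> 'rV[R]_d -> 'rV[R]_d)
  (s : {perm 'I_n}) (eta : R) (x0 : 'rV[R]_d) (i : nat) : (i <= n)%N ->
  x0 - inner_iter g s eta x0 i =
    eta *: \sum_(j < n | (j < i)%N) g (s j) (inner_iter g s eta x0 j).
Proof.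
elim: i => [|i IH] hi.
  rewrite subrr big_pred0; first by rewrite scaler0.
  by move=> j; rewrite ltn0.
have hin : (i < n)%N by [].
have -> : inner_iter g s eta x0 i.+1 =
   inner_iter g s eta x0 i - eta *: g (s (Ordinal hin)) (inner_iter g s eta x0 i).
  rewrite [LHS]/=.
  rewrite /perm_at (@insubT _ _ 'I_n i hin).
  reflexivity.
rewrite (sum_ltS (fun j => g (s j) (inner_iter g s eta x0 j)) (Ordinal hin)).
rewrite scalerDr -IH; last exact: ltnW.
rewrite opprB addrA addrAC.
reflexivity.
Qed.

End FileG.

Section FileH.
Set Implicit Arguments. Unset Strict Implicit.

Lemma sum_perm (R : realType) n (s : {perm 'I_n}) (F : 'I_n -> R) :
  \sum_(i < n) F (s i) = \sum_(i < n) F i.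
Proof. by rewrite [RHS](reindex_inj (@perm_inj _ s)). Qed.

Lemma sub_sum (R : realType) n (P : pred 'I_n) (F : 'I_n -> R) :
  (forall j, 0 <= F j) -> \sum_(j < n | P j) F j <= \sum_(j < n) F j.
Proof.
move=> h; rewrite [X in _ <= X](bigID P) /= lerDl.
by apply: sumr_ge0 => j _.
Qed.

Lemma final_alg (R : realType) (N Lb sD SB SX AW T et : R) :
  0 < N -> 0 <= SB -> 4 * et ^+ 2 * N ^+ 2 * Lb ^+ 2 <= 1 ->
  T <= N * Lb * (sD + et ^+ 2 * (2 * (N * Lb * (2 * SB)) + 4 * (N * Lb * (2 * SX))))
       + 4 * et ^+ 2 * AW - SB ->
  N^-1 * T <= Lb * sD + 8 * et ^+ 2 * N ^+ 2 * Lb ^+ 2 * (N^-1 * SX)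
              + 4 * et ^+ 2 * (N^-1 * AW).
Proof.
move=> N0 SB0 hc hT.
apply: le_trans (_ : N^-1 * (N * Lb * (sD + et ^+ 2 * (2 * (N * Lb * (2 * SB))
   + 4 * (N * Lb * (2 * SX)))) + 4 * et ^+ 2 * AW - SB) <= _).
  by rewrite ler_pM2l ?invr_gt0.
rewrite -subr_le0.
have -> : N^-1 * (N * Lb * (sD + et ^+ 2 * (2 * (N * Lb * (2 * SB))
   + 4 * (N * Lb * (2 * SX)))) + 4 * et ^+ 2 * AW - SB) -
  (Lb * sD + 8 * et ^+ 2 * N ^+ 2 * Lb ^+ 2 * (N^-1 * SX) + 4 * et ^+ 2 * (N^-1 * AW))
  = (N^-1 * SB) * (4 * et ^+ 2 * N ^+ 2 * Lb ^+ 2 - 1).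
  by field; rewrite gt_eqF.
apply: mulr_ge0_le0; first by rewrite mulr_ge0 // invr_ge0 ltW.
by rewrite subr_le0.
Qed.

End FileH.

Unset Implicit Arguments. Set Strict Implicit.


Theorem mainTheorem7 (R : realType) (n d : nat)
  (f : 'I_n -> 'rV[R]_d -> R) (g : 'I_n -> 'rV[R]_d -> 'rV[R]_d)
  (L : 'I_n -> R) (psi : 'rV[R]_d -> \bar R)
  (K : nat) (eta : nat -> R) (sigma : nat -> {perm 'I_n})
  (x : nat -> 'rV[R]_d) (xstar : 'rV[R]_d) :
  (0 < n)%N ->
  (forall i, convex_fun (f i)) ->
  (forall i, 0 < L i) ->
  (forall i, smooth_with (f i) (g i) (L i)) ->
  proper_fun psi -> closed_fun psi -> convex_efun psi ->
  (2 <= K)%N ->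
  (forall k, (1 <= k <= K)%N -> 0 < eta k) ->
  (* x_1 in dom psi *)
  (psi (x 1%N) < +oo)%E ->
  (* x_{k+1} = argmin_y { n psi(y) + 1/(2 eta_k) ||y - x_k^{n+1}||^2 } *)
  (forall k, (1 <= k <= K)%N -> forall y : 'rV[R]_d,
     (n%:R%:E * psi (x k.+1)
        + ((2 * eta k)^-1 * enorm (x k.+1 - inner_iter g (sigma k) (eta k) (x k) n) ^+ 2)%:E
      <= n%:R%:E * psi y
        + ((2 * eta k)^-1 * enorm (y - inner_iter g (sigma k) (eta k) (x k) n) ^+ 2)%:E)%E) ->
  (* F(x_* ) = inf F, finite; F = f + psi with f = (1/n) sum f_i *)
  (psi xstar \is a fin_num) ->
  (forall y : 'rV[R]_d,
     ((n%:R^-1 * \sum_(i < n) f i xstar)%:E + psi xstar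
      <= (n%:R^-1 * \sum_(i < n) f i y)%:E + psi y)%E) ->
  (* step-size condition *)
  (forall k, (1 <= k <= K)%N ->
     eta k <= (2 * n%:R * Num.sqrt ((n%:R^-1 * \sum_(i < n) L i)
                                    * \big[Num.max/0]_(i < n) L i))^-1) ->
  forall k, (1 <= k <= K)%N -> forall z : 'rV[R]_d,
    n%:R^-1 * \sum_(i < n)
        (bregman (f (sigma k i)) (g (sigma k i)) (x k.+1)
                 (inner_iter g (sigma k) (eta k) (x k) i)
         - bregman (f (sigma k i)) (g (sigma k i)) z
                 (inner_iter g (sigma k) (eta k) (x k) i))
    <= (n%:R^-1 * \sum_(i < n) L i) * enorm (x k.+1 - x k) ^+ 2
       + 8 * eta k ^+ 2 * n%:R ^+ 2 * (n%:R^-1 * \sum_(i < n) L i) ^+ 2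
           * bregman (fun y => n%:R^-1 * \sum_(i < n) f i y)
                     (fun y => n%:R^-1 *: \sum_(i < n) g i y) z xstar
       + 4 * eta k ^+ 2 *
           \sum_(i < n | (0 < i)%N)
              (L (sigma k i) / n%:R *
               enorm (\sum_(j < n | (j < i)%N) g (sigma k j) xstar) ^+ 2).
Proof.
move=> n0 Hconv Lpos Hsm _ _ _ _ Heta0 _ _ _ _ Hstep k hk z.
have et0 := Heta0 k hk; have hst := Hstep k hk.
have Bf_eq : bregman (fun y => n%:R^-1 * \sum_(i < n) f i y)
                     (fun y => n%:R^-1 *: \sum_(i < n) g i y) z xstar =
   n%:R^-1 * \sum_(i < n) bregman (f (sigma k i)) (g (sigma k i)) z xstar.
  rewrite (sum_perm (sigma k) (fun i => bregman (f i) (g i) z xstar)).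
  rewrite /bregman dotvZl dotv_suml !sumrB; ring.
rewrite Bf_eq.
set s := sigma k in hst Bf_eq *; set et := eta k in et0 hst *.
set y := inner_iter g s et (x k).
set N : R := n%:R in hst Bf_eq *.
have N0 : 0 < N by rewrite ltr0n.
set SL := \sum_(i < n) L i in hst *.
set Ls := \big[Num.max/0]_(i < n) L i in hst.
set Lb := N^-1 * SL in hst *.
have aLs : forall i, L i <= Ls by move=> i; exact: le_bigmax.
have SL0 : 0 <= SL by apply: sumr_ge0 => i _; exact/ltW.
have Lb0 : 0 <= Lb by rewrite mulr_ge0 // invr_ge0 ltW.
have LbLs : Lb <= Ls.
  rewrite /Lb ler_pdivrMl //.
  have := ler_sum (index_enum 'I_n) (fun i _ => aLs i) (P := xpredT).
  by rewrite sumr_const card_ord -mulr_natl.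
have SLe : SL = N * Lb by rewrite /Lb mulrA mulfV ?mul1r // gt_eqF.
have hcond : 4 * et ^+ 2 * N ^+ 2 * Lb ^+ 2 <= 1.
  pose r := Num.sqrt (Lb * Ls).
  have {}hst : et <= (2 * N * r)^-1 := hst.
  have LL0 : 0 <= Lb * Ls by rewrite mulr_ge0 // (le_trans Lb0 LbLs).
  have hr2 : r ^+ 2 = Lb * Ls by rewrite /r sqr_sqrtr.
  have r0 : 0 < r.
    rewrite lt_def sqrtr_ge0 andbT; apply/eqP => r0.
    by rewrite r0 mulr0 invr0 in hst; lra.
  have D0 : 0 < 2 * N * r by rewrite !mulr_gt0.
  rewrite -(ler_pM2r D0) mulVf ?gt_eqF // in hst.
  have h1 : (et * (2 * N * r)) ^+ 2 <= 1.
    have : 0 <= et * (2 * N * r) by rewrite mulr_ge0 // ltW.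
    nra.
  have e : (et * (2 * N * r)) ^+ 2 = 4 * et ^+ 2 * N ^+ 2 * (Lb * Ls).
    by rewrite -hr2; ring.
  have h2 : Lb ^+ 2 <= Lb * Ls by rewrite expr2 ler_wpM2l.
  have h3 : 0 <= 4 * et ^+ 2 * N ^+ 2.
    by apply: mulr_ge0; [apply: mulr_ge0 => //; exact: sqr_ge0 | exact: sqr_ge0].
  have := ler_wpM2l h3 h2; rewrite -e; move=> h4.
  exact: le_trans h4 h1.
have sumLs : \sum_(i < n) L (s i) = SL by rewrite sum_perm.
pose B i p q := bregman (f (s i)) (g (s i)) p q.
have desc : forall i p q, B i p q <= L (s i) / 2 * sq (p - q).
  by move=> i p q; exact: descent (Hsm (s i)) (Lpos (s i)) p q.
have coco : forall i p q, sq (g (s i) p - g (s i) q) / (2 * L (s i)) <= B i p q.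
  by move=> i p q; exact: cocoercive (Hsm (s i)) (Lpos (s i)) (Hconv (s i)) p q.
have Bnn : forall i p q, 0 <= B i p q.
  move=> i p q; apply: le_trans (coco i p q).
  by rewrite divr_ge0 ?sq_ge0 // mulr_ge0 // ltW.
have uB : forall i p q, sq (g (s i) q - g (s i) p) / L (s i) <= 2 * B i p q.
  move=> i p q; have := coco i p q.
  rewrite -sqN opprB.
  have -> : sq (g (s i) q - g (s i) p) / (2 * L (s i)) =
            (sq (g (s i) q - g (s i) p) / L (s i)) / 2.
    by field; rewrite gt_eqF.
  move=> h; lra.
have uB2 : forall i p q, sq (g (s i) p - g (s i) q) / L (s i) <= 2 * B i p q.
  by move=> i p q; rewrite -sqN opprB; exact: uB.
set SB := \sum_(i < n) B i z (y i).
set SX := \sum_(i < n) B i z xstar.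
have SB0 : 0 <= SB by apply: sumr_ge0 => i _.
pose U (i : 'I_n) := \sum_(j < n | (j < i)%N) (g (s j) (y j) - g (s j) z).
pose V (i : 'I_n) := \sum_(j < n | (j < i)%N) (g (s j) z - g (s j) xstar).
pose W (i : 'I_n) := \sum_(j < n | (j < i)%N) g (s j) xstar.
have Ub : forall i, sq (U i) <= N * Lb * (2 * SB).
  move=> i.
  apply: le_trans (wcs_vec (index_enum 'I_n) (P := fun j : 'I_n => (j < i)%N) (c := fun j => L (s j))
      (fun j => g (s j) (y j) - g (s j) z) (fun j _ => Lpos (s j))) _.
  apply: ler_pM.
  - by apply: sumr_ge0 => j _; apply/ltW.
  - by apply: sumr_ge0 => j _; rewrite divr_ge0 ?sq_ge0 // ltW.
  - by rewrite -SLe -sumLs; apply: sub_sum => j; apply/ltW.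
  apply: le_trans (sub_sum _ _) _; first by move=> j; rewrite divr_ge0 ?sq_ge0 // ltW.
  rewrite /SB mulr_sumr; apply: ler_sum => j _; exact: uB.
have Vb : forall i, sq (V i) <= N * Lb * (2 * SX).
  move=> i.
  apply: le_trans (wcs_vec (index_enum 'I_n) (P := fun j : 'I_n => (j < i)%N) (c := fun j => L (s j))
      (fun j => g (s j) z - g (s j) xstar) (fun j _ => Lpos (s j))) _.
  apply: ler_pM.
  - by apply: sumr_ge0 => j _; apply/ltW.
  - by apply: sumr_ge0 => j _; rewrite divr_ge0 ?sq_ge0 // ltW.
  - by rewrite -SLe -sumLs; apply: sub_sum => j; apply/ltW.
  apply: le_trans (sub_sum _ _) _; first by move=> j; rewrite divr_ge0 ?sq_ge0 // ltW.
  rewrite /SX mulr_sumr; apply: ler_sum => j _; exact: uB2.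
have Yi : forall i : 'I_n, x k - y i = et *: (U i + V i + W i).
  move=> i; rewrite /y iter_sum; last exact: ltnW.
  congr (_ *: _); rewrite /U /V /W -!big_split; apply: eq_bigr => j _.
  by rewrite [RHS]/= addrA !subrK.
set D := x k.+1 - x k.
have Ti : forall i : 'I_n, B i (x k.+1) (y i) - B i z (y i) <=
   L (s i) * (sq D + et ^+ 2 * (2 * (N * Lb * (2 * SB)) + 4 * (N * Lb * (2 * SX))))
   + 4 * et ^+ 2 * (L (s i) * sq (W i)) - B i z (y i).
  move=> i; apply: lerB; last exact: lexx.
  have a0 := Lpos (s i).
  have e : x k.+1 - y i = D + (x k - y i) by rewrite addrA subrK.
  have h1 := desc i (x k.+1) (y i); rewrite e in h1.
  have h2 := sqD_le D (x k - y i).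
  have h3 := sq3_le (U i) (V i) (W i).
  have h5 : sq (x k - y i) <=
      et ^+ 2 * (2 * (N * Lb * (2 * SB)) + 4 * (N * Lb * (2 * SX)) + 4 * sq (W i)).
    rewrite Yi sqZ; apply: ler_wpM2l; first exact: sqr_ge0.
    have := Ub i; have := Vb i; lra.
  set dd := sq D in h2 *; set yy := sq (x k - y i) in h2 h5.
  apply: le_trans h1 _.
  apply: le_trans (ler_wpM2l _ h2) _; first by rewrite divr_ge0 // ltW.
  have h6 : L (s i) / 2 * (2 * dd + 2 * yy) = L (s i) * (dd + yy) by field.
  rewrite h6.
  apply: le_trans (ler_wpM2l (ltW a0) (lerD (lexx dd) h5)) _.
  rewrite le_eqVlt; apply/orP; left; apply/eqP; ring.
have Hsum : \sum_(i < n) (B i (x k.+1) (y i) - B i z (y i)) <=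
   N * Lb * (sq D + et ^+ 2 * (2 * (N * Lb * (2 * SB)) + 4 * (N * Lb * (2 * SX))))
   + 4 * et ^+ 2 * \sum_(i < n) (L (s i) * sq (W i)) - SB.
  apply: le_trans (ler_sum _ (fun i _ => Ti i)) _.
  by rewrite sumrB big_split /= -mulr_suml -mulr_sumr sumLs SLe.
have Wsum : \sum_(i < n | (0 < i)%N)
     (L (s i) / N * enorm (\sum_(j < n | (j < i)%N) g (s j) xstar) ^+ 2) =
   N^-1 * \sum_(i < n) (L (s i) * sq (W i)).
  rewrite mulr_sumr [RHS](bigID (fun i : 'I_n => (0 < i)%N)) /=.
  rewrite [X in _ = _ + X]big1 ?addr0.
    by apply: eq_bigr => i _; rewrite enorm_sq mulrA [N^-1 * _]mulrC.
  move=> i; rewrite lt0n negbK => /eqP i0.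
  rewrite /W big_pred0; first by rewrite /sq dotv0l !mulr0.
  by move=> j; rewrite i0 ltn0.
rewrite Wsum enorm_sq.
exact: (final_alg N0 SB0 hcond Hsum).
Qed.
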